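(* Let $f=\frac1{1-X}\in GF(2)[[X]]$, and for $h\in GF(2)[[X]]$ let $\alpha[h]:g\mapsto h+g$ and $\mu[h]:g\mapsto hg$. Let $\Gamma$ be the group of bijections of $GF(2)[[X]]$ generated by the maps $g\mapsto f\cdot(s+g)$, $s\in\{0,1\}$, and let $N$ be the subgroup generated by $\{\alpha[sf^m]\mid s\in GF(2),\ m\in\mathbb{Z}\}$. Then $N$ is a normal subgroup of $\Gamma$.
   Context: Under the identification of $\{0,1\}^\omega$ with $GF(2)[[X]]$ via $(a_k)\mapsto\sum a_kX^k$, $\Gamma$ is the automaton group $\Gamma(\mathcal{M}_2)$ of the two-state Mealy machine over $\{0,1\}$ in which state $s$, reading $r$, outputs $s+r\bmod 2$ and moves to state $s+r\bmod 2$. *)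

(* Defs.v *)
From mathcomp Require Import all_boot.
From mathcomp Require Import ssrint.
Set Implicit Arguments. Unset Strict Implicit. Unset Printing Implicit Defensive.

(* GF(2)[[X]] : formal power series over GF(2) = bool (with xorb as addition,
   andb as product), represented by their coefficient sequences. *)
Definition ps := nat -> bool.

Definition ps_add (g h : ps) : ps := fun n => xorb (g n) (h n).
Definition ps_mul (g h : ps) : ps :=
  fun n => \big[xorb/false]_(i < n.+1) (g i && h (n - i)).

Definition ps_const (s : bool) : ps := fun n => if n is 0 then s else false.
Definition ps_one : ps := ps_const true.

(* f = 1/(1-X) = 1 + X + X^2 + ... *)
Definition f : ps := fun _ => true.
(* f^{-1} = 1 - X = 1 + X in GF(2)[[X]] *)
Definition finv : ps := fun n => (n <= 1)%N.

Definition fpow (m : int) : ps :=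
  match m with
  | Posz k => iter k (ps_mul f) ps_one
  | Negz k => iter k.+1 (ps_mul finv) ps_one
  end.

Definition alpha (h : ps) : ps -> ps := fun g => ps_add h g.
Definition mu (h : ps) : ps -> ps := fun g => ps_mul h g.

Inductive gen_group {T : Type} (S : (T -> T) -> Prop) : (T -> T) -> Prop :=
| gen_id : gen_group S id
| gen_comp s g : S s -> gen_group S g -> gen_group S (s \o g)
| gen_comp_inv s s' g : S s -> cancel s s' -> cancel s' s ->
    gen_group S g -> gen_group S (s' \o g).

Definition Gamma_gens (t : ps -> ps) : Prop :=
  exists s : bool, t = fun g => ps_mul f (ps_add (ps_const s) g).
Definition Gamma := gen_group Gamma_gens.

Definition N_gens (t : ps -> ps) : Prop :=
  exists (s : bool) (m : int), t = alpha (ps_mul (ps_const s) (fpow m)).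
Definition N := gen_group N_gens.

Definition normal_subgroup {T : Type} (H G : (T -> T) -> Prop) : Prop :=
  (forall h, H h -> G h) /\
  (forall g g', G g -> cancel g g' -> cancel g' g ->
     forall h, H h -> H (g \o h \o g')).

(* Main.v *)
Require Import Defs.
From mathcomp Require Import all_boot.
From mathcomp Require Import ssrint.
From Stdlib Require Import FunctionalExtensionality.
Import Defs.
From HB Require Import structures.
Set Implicit Arguments. Unset Strict Implicit.

Lemma xorbA' : associative xorb. Proof. by case; case; case. Qed.
Lemma xorbC' : commutative xorb. Proof. by case; case. Qed.
Lemma xorFb' : left_id false xorb. Proof. by case. Qed.
Lemma xorbF (b : bool) : xorb b false = b. Proof. by case: b. Qed.
HB.instance Definition _ := Monoid.isComLaw.Build bool false xorb xorbA' xorbC' xorFb'.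

Definition zero : ps := fun _ => false.
Definition T (b : bool) : ps -> ps := fun g => ps_mul f (ps_add (ps_const b) g).
Definition Ti (b : bool) : ps -> ps := fun g => ps_add (ps_mul finv g) (ps_const b).

Lemma psE (a b : ps) : (forall n, a n = b n) -> a = b.
Proof. exact: functional_extensionality. Qed.

Lemma big_xor_split n (F G : 'I_n -> bool) :
  \big[xorb/false]_(i < n) xorb (F i) (G i) =
  xorb (\big[xorb/false]_(i < n) F i) (\big[xorb/false]_(i < n) G i).
Proof.
elim: n F G => [|n IH] F G; first by rewrite !big_ord0.
rewrite !big_ord_recr /= IH.
by case: (\big[xorb/false]_(i < n) F _); case: (\big[xorb/false]_(i < n) G _);
   case: (F _); case: (G _).
Qed.

Lemma big_xor0 n : \big[xorb/false]_(i < n) false = false.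
Proof. by elim: n => [|n IH]; rewrite ?big_ord0 // big_ord_recr /= IH. Qed.

Lemma mul_addr g a b : ps_mul g (ps_add a b) = ps_add (ps_mul g a) (ps_mul g b).
Proof.
apply: psE => n; rewrite /ps_mul /ps_add -big_xor_split.
apply: eq_bigr => i _; by case: (g i); case: (a _); case: (b _).
Qed.

Lemma mul_zero g : ps_mul g zero = zero.
Proof.
apply: psE => n; rewrite /ps_mul /zero.
rewrite (eq_bigr (fun _ => false)); first exact: big_xor0.
by move=> i _; rewrite andbF.
Qed.

Lemma mul_f_0 z : ps_mul f z 0 = z 0.
Proof. by rewrite /ps_mul big_ord_recl big_ord0 /= xorbC'. Qed.

Lemma mul_f_S z n : ps_mul f z n.+1 = xorb (z n.+1) (ps_mul f z n).
Proof. by rewrite /ps_mul big_ord_recl subn0. Qed.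

Lemma mul_finv_0 z : ps_mul finv z 0 = z 0.
Proof. by rewrite /ps_mul big_ord_recl big_ord0 /= xorbC'. Qed.

Lemma mul_finv_S z n : ps_mul finv z n.+1 = xorb (z n.+1) (z n).
Proof.
rewrite /ps_mul big_ord_recl big_ord_recl subn0 /=.
by rewrite big_xor0 xorbF /bump /= subSS subn0.
Qed.

Lemma f_finv y : ps_mul f (ps_mul finv y) = y.
Proof.
apply: psE; elim=> [|n IH]; first by rewrite mul_f_0 mul_finv_0.
rewrite mul_f_S IH mul_finv_S.
by case: (y n); case: (y n.+1).
Qed.

Lemma finv_f y : ps_mul finv (ps_mul f y) = y.
Proof.
apply: psE; case=> [|n]; first by rewrite mul_finv_0 mul_f_0.
rewrite mul_finv_S mul_f_S.
by case: (y n.+1); case: (ps_mul f y n).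
Qed.

Lemma mul_const b y : ps_mul (ps_const b) y = if b then y else zero.
Proof.
apply: psE => n; rewrite /ps_mul big_ord_recl subn0 /=.
rewrite (eq_bigr (fun _ => false)); last by move=> i _.
by rewrite big_xor0 xorbF; case: b.
Qed.

Lemma T_Ti b x : T b (Ti b x) = x.
Proof.
rewrite /T /Ti.
have -> : ps_add (ps_const b) (ps_add (ps_mul finv x) (ps_const b)) = ps_mul finv x.
  by apply: psE => n; rewrite /ps_add; case: (ps_const b n); case: (ps_mul finv x n).
exact: f_finv.
Qed.

Lemma Ti_T b x : Ti b (T b x) = x.
Proof.
rewrite /T /Ti finv_f.
by apply: psE => n; rewrite /ps_add; case: (ps_const b n); case: (x n).
Qed.

Lemma T_conj b d x : T b (ps_add d (Ti b x)) = ps_add (ps_mul f d) x.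
Proof.
rewrite /T /Ti.
have -> : ps_add (ps_const b) (ps_add d (ps_add (ps_mul finv x) (ps_const b)))
          = ps_add d (ps_mul finv x).
  by apply: psE => n; rewrite /ps_add; case: (ps_const b n); case: (ps_mul finv x n);
     case: (d n).
by rewrite mul_addr f_finv.
Qed.

Lemma Ti_conj b d x : Ti b (ps_add d (T b x)) = ps_add (ps_mul finv d) x.
Proof.
rewrite /T /Ti mul_addr finv_f.
by apply: psE => n; rewrite /ps_add; case: (ps_const b n); case: (x n);
   case: (ps_mul finv d n).
Qed.

Lemma alpha0 : alpha zero = id.
Proof. by apply: functional_extensionality => x; apply: psE. Qed.

Lemma alphaD a c : alpha a \o alpha c = alpha (ps_add a c).
Proof.
apply: functional_extensionality => x; apply: psE => n.
by rewrite /= /alpha /ps_add; case: (a n); case: (c n); case: (x n).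
Qed.

Lemma alpha_inv a s' : cancel s' (alpha a) -> s' = alpha a.
Proof.
move=> H; apply: functional_extensionality => y; apply: psE => n.
have := congr1 (fun g => g n) (H y); rewrite /alpha /ps_add => <-.
by case: (a n); case: (s' y n).
Qed.

Lemma N_alpha h : N h -> exists c, h = alpha c.
Proof.
elim=> [|s g [b [m ->]] _ [c ->]|s s' g [b [m ->]] _ H2 _ [c ->]].
- by exists zero; rewrite alpha0.
- by eexists; rewrite alphaD.
- by rewrite (alpha_inv H2); eexists; rewrite alphaD.
Qed.

Lemma N_mul u :
  (forall b m, exists b' m', ps_mul u (ps_mul (ps_const b) (fpow m))
                           = ps_mul (ps_const b') (fpow m')) ->
  forall c, N (alpha c) -> N (alpha (ps_mul u c)).
Proof.
move=> Hu.
suff H : forall h, N h -> forall c, h = alpha c -> N (alpha (ps_mul u c)).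
  by move=> c Hc; apply: (H _ Hc).
move=> h; elim.
- move=> c Hc.
  have -> : c = zero.
    apply: psE => n; have := congr1 (fun g => g zero n) Hc.
    by rewrite /= /alpha /ps_add /zero; case: (c n).
  by rewrite mul_zero alpha0; exact: gen_id.
- move=> s g [b [m ->]] Ng IH c Hc.
  have [d Hd] := N_alpha Ng.
  have -> : c = ps_add (ps_mul (ps_const b) (fpow m)) d.
    apply: psE => n; have := congr1 (fun g => g zero n) Hc.
    rewrite Hd /= /alpha /ps_add /zero.
    by case: (d n); case: (c n); case: (ps_mul _ _ n).
  rewrite mul_addr -alphaD; have [b' [m' ->]] := Hu b m.
  apply: gen_comp; first by exists b', m'.
  exact: IH.
- move=> s s' g [b [m ->]] _ H2 Ng IH c Hc.
  rewrite (alpha_inv H2) in Hc.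
  have [d Hd] := N_alpha Ng.
  have -> : c = ps_add (ps_mul (ps_const b) (fpow m)) d.
    apply: psE => n; have := congr1 (fun g => g zero n) Hc.
    rewrite Hd /= /alpha /ps_add /zero.
    by case: (d n); case: (c n); case: (ps_mul _ _ n).
  rewrite mul_addr -alphaD; have [b' [m' ->]] := Hu b m.
  apply: gen_comp; first by exists b', m'.
  exact: IH.
Qed.

Lemma Hf b m : exists b' m', ps_mul f (ps_mul (ps_const b) (fpow m))
                           = ps_mul (ps_const b') (fpow m').
Proof.
suff [m' E] : exists m', ps_mul f (fpow m) = fpow m'.
  by exists b, m'; rewrite !mul_const -E; case: b => //=; rewrite mul_zero.
case: m => [k|[|k]].
- by exists (Posz k.+1).
- by exists (Posz 0); rewrite /= f_finv.
- by exists (Negz k); rewrite /fpow iterS f_finv.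
Qed.

Lemma Hfinv b m : exists b' m', ps_mul finv (ps_mul (ps_const b) (fpow m))
                           = ps_mul (ps_const b') (fpow m').
Proof.
suff [m' E] : exists m', ps_mul finv (fpow m) = fpow m'.
  by exists b, m'; rewrite !mul_const -E; case: b => //=; rewrite mul_zero.
case: m => [[|k]|k].
- by exists (Negz 0).
- by exists (Posz k); rewrite /fpow iterS finv_f.
- by exists (Negz k.+1).
Qed.

Lemma Gamma_comp a b : Gamma a -> Gamma b -> Gamma (a \o b).
Proof.
move=> Ha Hb; elim: Ha => [|s g Hs _ IH|s s' g Hs H1 H2 _ IH].
- exact: Hb.
- exact: (gen_comp Hs IH).
- exact: (gen_comp_inv Hs H1 H2 IH).
Qed.

Lemma Gamma_T b : Gamma (T b).
Proof. by have := gen_comp (S := Gamma_gens) (s := T b) (ex_intro _ b erefl) (gen_id _). Qed.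

Lemma Gamma_Ti b : Gamma (Ti b).
Proof.
have := gen_comp_inv (S := Gamma_gens) (s := T b) (s' := Ti b)
  (ex_intro _ b erefl) (@Ti_T b) (@T_Ti b) (gen_id _).
done.
Qed.

Lemma Gamma_alpha_f c : Gamma (alpha c) -> Gamma (alpha (ps_mul f c)).
Proof.
move=> H.
have -> : alpha (ps_mul f c) = T false \o (alpha c \o Ti false).
  by apply: functional_extensionality => x /=; rewrite /alpha T_conj.
by apply: Gamma_comp; [exact: Gamma_T | apply: Gamma_comp => //; exact: Gamma_Ti].
Qed.

Lemma Gamma_alpha_finv c : Gamma (alpha c) -> Gamma (alpha (ps_mul finv c)).
Proof.
move=> H.
have -> : alpha (ps_mul finv c) = Ti false \o (alpha c \o T false).
  by apply: functional_extensionality => x /=; rewrite /alpha Ti_conj.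
by apply: Gamma_comp; [exact: Gamma_Ti | apply: Gamma_comp => //; exact: Gamma_T].
Qed.

Lemma Gamma_alpha_one : Gamma (alpha ps_one).
Proof.
have H : Gamma (alpha (ps_mul f ps_one)).
  have -> : alpha (ps_mul f ps_one) = T true \o Ti false.
    apply: functional_extensionality => x /=.
    rewrite /T /Ti.
    have -> : ps_add (ps_const true) (ps_add (ps_mul finv x) (ps_const false))
              = ps_add ps_one (ps_mul finv x).
      by apply: psE => n; rewrite /ps_add /ps_one /ps_const;
         case: n => [|n] /=; case: (ps_mul finv x _).
    by rewrite mul_addr f_finv.
  by apply: Gamma_comp; [exact: Gamma_T | exact: Gamma_Ti].
by have := Gamma_alpha_finv H; rewrite finv_f.
Qed.

Lemma Gamma_fpow m : Gamma (alpha (fpow m)).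
Proof.
case: m => k.
- elim: k => [|k IH]; first exact: Gamma_alpha_one.
  by rewrite /fpow iterS; apply: Gamma_alpha_f.
- elim: k => [|k IH]; first exact: (Gamma_alpha_finv Gamma_alpha_one).
  by rewrite /fpow iterS; apply: Gamma_alpha_finv.
Qed.

Lemma N_Gamma h : N h -> Gamma h.
Proof.
elim=> [|s g [b [m ->]] _ IH|s s' g [b [m ->]] _ H2 _ IH].
- exact: gen_id.
- apply: Gamma_comp => //; rewrite mul_const; case: b; first exact: Gamma_fpow.
  by rewrite alpha0; exact: gen_id.
- rewrite (alpha_inv H2); clear H2.
  apply: Gamma_comp => //; rewrite mul_const; case: b; first exact: Gamma_fpow.
  by rewrite alpha0; exact: gen_id.
Qed.

Lemma conj_step (s si : ps -> ps) (u : ps) :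
  cancel s si -> cancel si s ->
  (forall d x, s (ps_add d (si x)) = ps_add (ps_mul u d) x) ->
  (forall c, N (alpha c) -> N (alpha (ps_mul u c))) ->
  forall g0, (forall g', cancel g0 g' -> cancel g' g0 ->
               forall c, N (alpha c) -> N (g0 \o alpha c \o g')) ->
  forall g', cancel (s \o g0) g' -> cancel g' (s \o g0) ->
  forall c, N (alpha c) -> N ((s \o g0) \o alpha c \o g').
Proof.
move=> ssi sis Hconj Hu g0 IH g' H1 H2 c Nc.
have K1 : cancel g0 (g' \o s) by move=> x; exact: H1.
have K2 : cancel (g' \o s) g0.
  move=> y; apply: (can_inj ssi); exact: H2.
have Nd := IH _ K1 K2 c Nc.
have [d Hd] := N_alpha Nd.
have -> : (s \o g0) \o alpha c \o g' = alpha (ps_mul u d).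
  apply: functional_extensionality => x.
  have := congr1 (fun g => g (si x)) Hd => /= E.
  by rewrite /= sis in E; rewrite /= E /alpha Hconj.
by apply: Hu; rewrite -Hd.
Qed.

Theorem proposition8p11 : normal_subgroup N Gamma.
Proof.
split; first exact: N_Gamma.
move=> g g' Hg; elim: Hg g' => [|s g0 [b ->] _ IH|s s' g0 [b ->] H1 H2 _ IH] g'.
- move=> _ H h Nh; have [c Hc] := N_alpha Nh.
  have -> : id \o h \o g' = h.
    apply: functional_extensionality => x /=; by rewrite -{2}(H x).
  exact: Nh.
- move=> K1 K2 h Nh; have [c Hc] := N_alpha Nh; subst h.
  exact (conj_step (@Ti_T b) (@T_Ti b) (@T_conj b) (N_mul Hf) (fun g1 a1 a2 c1 Nc => IH g1 a1 a2 _ Nc) K1 K2 Nh).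
- move=> K1 K2 h Nh; have [c Hc] := N_alpha Nh; subst h.
  have E : s' = Ti b.
    apply: functional_extensionality => x.
    by rewrite -{1}(T_Ti b x) H1.
  subst s'.
  exact (conj_step (@T_Ti b) (@Ti_T b) (@Ti_conj b) (N_mul Hfinv)
     (fun g1 a1 a2 c1 Nc => IH g1 a1 a2 _ Nc) K1 K2 Nh).
Qed.
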